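(* For every bounded continuous $f:\mathbb{R}^d\to\mathbb{C}$ and every $\epsilon>0$ there exists $n_0\ge1$ such that for every sequence $\{(R_n,B_n)\}_{n=1}^\infty\subseteq\mathcal{D}_d$, $$\Big|\int f\,d\mu_{n_0}-\int f\,d\mu\Big|<\epsilon,$$ where $\mu_n=\delta_{R_1^{-1}B_1}*\delta_{(R_2R_1)^{-1}B_2}*\cdots*\delta_{(R_n\cdots R_1)^{-1}B_n}$ and $\mu$ is the weak limit of $\mu_n$.
   Context: $\mathcal{D}_d$ is the set of pairs $(R,B)$ with $R=\mathrm{diag}(m_1,\dots,m_d)$, $m_1,\dots,m_d\ge2$ integers, and $B$ a nonempty subset of $\{0,\dots,m_1-1\}\times\cdots\times\{0,\dots,m_d-1\}$. For finite $A$, $\delta_A=\frac{1}{\#A}\sum_{a\in A}\delta_a$. For every sequence in $\mathcal{D}_d$ the measures $\mu_n$ converge weakly to a Borel probability measure $\mu$ (the infinite convolution). *)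

(* Defs.v *)
From HB Require Import structures.
From mathcomp Require Import all_boot all_order all_algebra.
From mathcomp Require Import all_classical all_reals all_analysis.
From mathcomp.real_closed Require Import complex.

Set Implicit Arguments.
Unset Strict Implicit.
Unset Printing Implicit Defensive.

Import Order.TTheory GRing.Theory Num.Theory.
Import numFieldNormedType.Exports.
Local Open Scope classical_set_scope.
Local Open Scope ring_scope.

(* R^d is represented for measure theory by [d.-tuple R] (its canonical
   sigma-algebra is the product sigma-algebra of the Borel sets of R, i.e.
   the Borel sigma-algebra of R^d), and for topology by ['rV[R]_d]
   (the normed space R^d); [tup_of_row] is the identification. *)
Definition tup_of_row (R : realType) (d : nat) (x : 'rV[R]_d) : d.-tuple R :=
  [tuple x ord0 i | i < d].

Definition bdd_cont_R (R : realType) (d : nat) (g : d.-tuple R -> R) : Prop :=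
  (exists M : R, forall x, `|g x| <= M) /\ continuous (g \o @tup_of_row R d).

(* A complex-valued function on R^d is bounded and continuous
   (C carries the topology of R^2, so continuity of f is continuity of its
   real and imaginary parts). *)
Definition bdd_cont_C (R : realType) (d : nat) (f : d.-tuple R -> R[i]) : Prop :=
  (exists M : R, forall x, Normc.normc (f x) <= M) /\
  continuous ((fun x => complex.Re (f x)) \o @tup_of_row R d) /\
  continuous ((fun x => complex.Im (f x)) \o @tup_of_row R d).

Definition cintegral (R : realType) (d : nat)
    (mu : probability (d.-tuple R) R) (f : d.-tuple R -> R[i]) : R[i] :=
  Complex (Rintegral mu setT (fun x => complex.Re (f x)))
          (Rintegral mu setT (fun x => complex.Im (f x))).

(* A sequence in D_d, indexed from 0: the k-th pair (R_k, B_k) is given by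
   R_k = diag (m k 0, ..., m k (d-1)) and the digit set B_k (a duplicate-free
   nonempty list of integer vectors b with 0 <= b_i < m k i). *)
Definition in_Dd (d : nat) (m : nat -> 'I_d -> nat) (B : nat -> seq (d.-tuple nat))
  : Prop :=
  forall k, (forall i, (2 <= m k i)%N) /\ B k != [::] /\ uniq (B k) /\
            all (fun b : d.-tuple nat => [forall i, (tnth b i < m k i)%N]) (B k).

(* (R_k ... R_0)^{-1} b, coordinatewise b_i / (m 0 i * ... * m k i). *)
Definition scaled_digit (R : realType) (d : nat) (m : nat -> 'I_d -> nat) (k : nat)
    (b : d.-tuple nat) : d.-tuple R :=
  [tuple (tnth b i)%:R / (\prod_(j < k.+1) m j i)%:R | i < d].

Definition tup_add (R : realType) (d : nat) (x y : d.-tuple R) : d.-tuple R :=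
  [tuple tnth x i + tnth y i | i < d].

(* The support of mu_n = delta_{(R_0)^{-1}B_0} * ... * delta_{(R_{n-1}...R_0)^{-1}B_{n-1}},
   listed with multiplicity: all sums  sum_{k<n} (R_k...R_0)^{-1} b_k
   with b_k in B_k.  mu_n is the uniform probability on this list
   (with multiplicity), which is exactly that convolution. *)
Fixpoint conv_points (R : realType) (d : nat) (m : nat -> 'I_d -> nat)
    (B : nat -> seq (d.-tuple nat)) (n : nat) : seq (d.-tuple R) :=
  match n with
  | 0 => [:: [tuple (0 : R) | i < d]]
  | n'.+1 => [seq tup_add x (scaled_digit R m n' b)
               | x <- conv_points R m B n', b <- B n']
  end.

Definition int_mu_n (R : realType) (V : unitRingType) (d : nat)
    (m : nat -> 'I_d -> nat) (B : nat -> seq (d.-tuple nat)) (n : nat)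
    (g : d.-tuple R -> V) : V :=
  (size (conv_points R m B n))%:R^-1 * \sum_(x <- conv_points R m B n) g x.

Definition weak_limit (R : realType) (d : nat) (m : nat -> 'I_d -> nat)
    (B : nat -> seq (d.-tuple nat)) (mu : probability (d.-tuple R) R) : Prop :=
  forall g : d.-tuple R -> R, bdd_cont_R g ->
    (fun n => @int_mu_n R R d m B n g) @ \oo --> Rintegral mu setT g.

(* Main.v *)
Set Warnings "-all".
Require Import Defs.
From HB Require Import structures.
From mathcomp Require Import all_boot all_order all_algebra.
From mathcomp Require Import all_classical all_reals all_analysis.
From mathcomp.real_closed Require Import complex.
From mathcomp Require Import ring lra.
Import Order.TTheory GRing.Theory Num.Theory.
Import numFieldNormedType.Exports.
Set Implicit Arguments.
Unset Strict Implicit.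
Local Open Scope classical_set_scope.
Local Open Scope ring_scope.

Section Comb.
Variables (R : realType) (d : nat) (m : nat -> 'I_d -> nat) (B : nat -> seq (d.-tuple nat)).

Definition tzero : d.-tuple R := [tuple (0:R) | i < d].

Fixpoint tailp (n0 k : nat) : seq (d.-tuple R) :=
  match k with
  | 0 => [:: tzero]
  | k'.+1 => [seq tup_add x (scaled_digit R m (n0 + k') b) | x <- tailp n0 k', b <- B (n0 + k')]
  end.

Lemma cp_tailp n : conv_points R m B n = tailp 0 n.
Proof. by elim: n => //= n ->; rewrite add0n. Qed.

Lemma tup_addA (x y z : d.-tuple R) : tup_add (tup_add x y) z = tup_add x (tup_add y z).
Proof. by apply: eq_from_tnth => i; rewrite !tnth_mktuple addrA. Qed.

Lemma tup_add0 (x : d.-tuple R) : tup_add x tzero = x.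
Proof. by apply: eq_from_tnth => i; rewrite !tnth_mktuple addr0. Qed.

Lemma sum_tailp (V : nmodType) (g : d.-tuple R -> V) n0 k :
  \sum_(x <- tailp 0 (n0 + k)) g x =
  \sum_(x <- tailp 0 n0) \sum_(t <- tailp n0 k) g (tup_add x t).
Proof.
elim: k g => [|k IH] g.
  by rewrite addn0; apply: eq_bigr => x _; rewrite big_seq1 tup_add0.
rewrite addnS /= add0n big_allpairs_dep.
rewrite (IH (fun x => \sum_(b <- B (n0+k)) g (tup_add x (scaled_digit R m (n0 + k) b)))).
apply: eq_bigr => x _; rewrite big_allpairs_dep; apply: eq_bigr => t _.
by apply: eq_bigr => b _; rewrite tup_addA.
Qed.

Lemma size_tailp n0 k :
  size (tailp 0 (n0 + k)) = (size (tailp 0 n0) * size (tailp n0 k))%N.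
Proof.
elim: k => [|k IH]; first by rewrite addn0 muln1.
by rewrite addnS /= !size_allpairs add0n IH mulnA.
Qed.

Hypothesis HD : in_Dd m B.

Lemma size_tailp_gt0 n0 k : (0 < size (tailp n0 k))%N.
Proof.
elim: k => [|k IH] //=; rewrite size_allpairs muln_gt0 IH /=.
have [_ [+ _]] := HD (n0 + k); by case: (B (n0 + k)).
Qed.

Definition Pp n i := (\prod_(j < n) m j i)%N.

Lemma Pp_ge n i : (2 ^ n <= Pp n i)%N.
Proof.
elim: n => [|n IH]; first by rewrite /Pp big_ord0.
rewrite /Pp big_ord_recr /= expnSr leq_mul //.
by have [+ _] := HD n; apply.
Qed.

Lemma Pp_gt0 n i : (0 < Pp n i)%N.
Proof. by apply: leq_trans (Pp_ge n i); rewrite expn_gt0. Qed.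

Lemma tailp_bound n0 k t : t \in tailp n0 k -> forall i,
  0 <= tnth t i <= (Pp n0 i)%:R^-1 - (Pp (n0 + k) i)%:R^-1.
Proof.
elim: k t => [|k IH] t.
  by rewrite inE => /eqP -> i; rewrite addn0 subrr tnth_mktuple lexx.
move=> /allpairsP [[x b] /= [hx hb ->]] i.
have [hm [_ [_ hall]]] := HD (n0 + k).
have /forallP /(_ i) hbi := allP hall b hb.
have := IH x hx i; rewrite !tnth_mktuple.
have hPk := Pp_gt0 (n0 + k) i.
have hmk := hm i.
rewrite addnS /Pp big_ord_recr /= -/(Pp (n0 + k) i) natrM.
set p := (Pp (n0 + k) i)%:R; set q := (m (n0 + k) i)%:R.
set bb := (tnth b i)%:R.
have p0 : 0 < p by rewrite ltr0n.
have q0 : 0 < q by rewrite ltr0n; apply: leq_trans hmk.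
have hbq : bb + 1 <= q by rewrite /bb /q natr1 ler_nat.
have hb0 : 0 <= bb by rewrite ler0n.
move=> /andP [h1 h2]; apply/andP; split.
  by apply: addr_ge0 => //; apply: divr_ge0 => //; apply: mulr_ge0; lra.
suff : bb / (p * q) <= p^-1 - (p * q)^-1 by lra.
rewrite ler_pdivrMr ?mulr_gt0 //.
have -> : (p^-1 - (p * q)^-1) * (p * q) = q - 1.
  by field; apply/andP; split; apply: lt0r_neq0.
lra.
Qed.

Lemma sum_const_seq (T : Type) (s : seq T) (c : R) : \sum_(x <- s) c = (size s)%:R * c.
Proof.
elim: s => [|x s IH]; first by rewrite big_nil mul0r.
by rewrite big_cons IH /= -add1n natrD mulrDl mul1r.
Qed.

Lemma int_mu_diff (g : d.-tuple R -> R) n0 k e :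
  (forall x t, x \in tailp 0 n0 -> t \in tailp n0 k -> `|g (tup_add x t) - g x| <= e) ->
  `|int_mu_n m B (n0 + k) g - int_mu_n m B n0 g| <= e.
Proof.
move=> He.
rewrite /int_mu_n !cp_tailp size_tailp sum_tailp.
set S := tailp 0 n0; set T := tailp n0 k.
have sS : 0 < (size S)%:R :> R by rewrite ltr0n size_tailp_gt0.
have sT : 0 < (size T)%:R :> R by rewrite ltr0n size_tailp_gt0.
have -> : \sum_(x <- S) g x = (size T)%:R^-1 * \sum_(x <- S) \sum_(t <- T) g x.
  rewrite mulr_sumr; apply: eq_bigr => x _; rewrite sum_const_seq mulrA mulVf ?mul1r //.
  exact: lt0r_neq0.
rewrite natrM (mulrA (size S)%:R^-1) -invfM -mulrBr -sumrB.
rewrite normrM ger0_norm; last by rewrite invr_ge0 mulr_ge0 // ltW.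
apply: le_trans (_ : _ * \sum_(x <- S) \sum_(t <- T) e <= _).
  apply: ler_wpM2l; first by rewrite invr_ge0 mulr_ge0 // ltW.
  apply: le_trans (ler_norm_sum _ _ _) _.
  rewrite big_seq_cond [X in _ <= X]big_seq_cond; apply: ler_sum => x /andP [hx _].
  rewrite -sumrB; apply: le_trans (ler_norm_sum _ _ _) _.
  rewrite big_seq_cond [X in _ <= X]big_seq_cond; apply: ler_sum => t /andP [ht _].
  exact: He.
rewrite (eq_bigr (fun=> (size T)%:R * e)); last by move=> x _; rewrite sum_const_seq.
rewrite sum_const_seq.
have -> : ((size S)%:R * (size T)%:R)^-1 * ((size S)%:R * ((size T)%:R * e)) = e :> R.
  by field; apply/andP; split; apply: lt0r_neq0.
done.
Qed.
End Comb.
Lemma ballrV (R : realType) d (x y : 'rV[R]_d) (e : R) :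
  0 < e -> (forall i, `|x ord0 i - y ord0 i| < e) -> ball x e y.
Proof.
move=> e0 H. split => // i j. rewrite (ord1 i). exact: H.
Qed.

Definition row_of_tup (R : realType) d (x : d.-tuple R) : 'rV[R]_d := \row_i tnth x i.
Lemma row_of_tupK (R : realType) d (x : d.-tuple R) : tup_of_row (row_of_tup x) = x.
Proof. apply: eq_from_tnth => i; by rewrite tnth_mktuple mxE. Qed.

Lemma unif_cont (R : realType) d (g : d.-tuple R -> R) : continuous (g \o @tup_of_row R d) ->
  forall e : R, 0 < e -> exists2 del : R, 0 < del &
   forall x y : d.-tuple R, (forall i, 0 <= tnth x i <= 1) ->
     (forall i, `|tnth y i - tnth x i| < del) -> `|g y - g x| < e.
Proof.
move=> gc e e0.
set G := g \o @tup_of_row R d.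
have cK := @rV_compact _ d (fun=> `[(0:R),1]%classic) (fun _ => @segment_compact _ 0 1).
set K := [set v | _] in cK.
have H : forall x, K x -> \forall x' \near x & i \near at_right (0:R),
    (fun del v => forall w, ball v del w -> `|G w - G v| < e) i x'.
  move=> x _.
  have hx : \forall w \near x, `|G x - G w| < e/2.
    by move/cvgrPdist_lt: (gc x); apply; rewrite divr_gt0.
  case/nbhs_ballP: hx => r r0 Hr.
  exists (ball x (r/2), [set del | del < r/2]) => /=; first split.
  - by apply: nbhsx_ballx; rewrite divr_gt0.
  - apply/nbhs_ballP; exists (r/2) => /=; first by rewrite divr_gt0.
    move=> y /= hy y0. move: hy. rewrite /ball /= sub0r normrN gtr0_norm //.
  - move=> [x' del] [/= hx' hdel] w hw.
    have r2 : r/2 <= r by move: r0 => /= r0; lra.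
    have h1 := Hr _ (le_ball r2 hx').
    have h2 : ball x r w.
      have := ball_triangle hx' hw. apply: le_ball; lra.
    have := Hr _ h2. move: h1 => /=.
    rewrite /G /=. set a := g _. set b := g _. set c := g _.
    move=> h3 h4.
    have := ler_distD a c b; rewrite (distrC c a); lra.
have := (compact_near_coveringP K).1 cK R (at_right (0:R))
  (fun del v => forall w, ball v del w -> `|G w - G v| < e) _ H.
move=> Hn; have {}Hn := Hn (at_right_proper_filter 0).
have [r /= r0 Hr] := (nbhs_ballP _ _).1 Hn.
have r20 : 0 < r / 2 by rewrite divr_gt0.
have := Hr (r/2). case/(_ _)/Wrap.
  by rewrite /ball /= sub0r normrN gtr0_norm //; lra.
move=> /(_ r20) HK.
exists (r/2) => // x y hx hy.
have Kx : K (row_of_tup x).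
  move=> i; rewrite mxE /= in_itv /=; exact: hx.
have := HK _ Kx (row_of_tup y).
rewrite /G /= !row_of_tupK; apply.
apply: ballrV => // i; rewrite !mxE distrC; exact: hy.
Qed.

Section Cplx.
Variable R : rcfType.

Lemma sum_complex (T : Type) (s : seq T) (h : T -> R[i]) :
  \sum_(x <- s) h x = Complex (\sum_(x <- s) complex.Re (h x)) (\sum_(x <- s) complex.Im (h x)).
Proof.
elim: s => [|x s IH]; first by rewrite !big_nil.
by rewrite !big_cons IH; case: (h x).
Qed.

Lemma natC_mul (n : nat) (a b : R) :
  (n%:R : R[i])^-1 * Complex a b = Complex ((n%:R)^-1 * a) ((n%:R)^-1 * b).
Proof.
rewrite -(rmorph_nat (real_complex R)) -fmorphV /=.
apply/eqP; rewrite eq_complex /=.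
by rewrite !mul0r subr0 addr0 !eqxx.
Qed.

Lemma Re_le_normc (z : R[i]) : `|complex.Re z| <= Normc.normc z.
Proof.
case: z => a b /=; rewrite -sqrtr_sqr ler_sqrt ?addr_ge0 ?sqr_ge0 //.
by rewrite lerDl sqr_ge0.
Qed.

Lemma Im_le_normc (z : R[i]) : `|complex.Im z| <= Normc.normc z.
Proof.
case: z => a b /=; rewrite -sqrtr_sqr ler_sqrt ?addr_ge0 ?sqr_ge0 //.
by rewrite lerDr sqr_ge0.
Qed.

Lemma normc_le (a b : R) : Normc.normc (Complex a b) <= `|a| + `|b|.
Proof.
rewrite /= -(ger0_norm (addr_ge0 (normr_ge0 a) (normr_ge0 b))) -sqrtr_sqr.
rewrite ler_sqrt ?sqr_ge0 // sqrrD (real_normK (num_real a)) (real_normK (num_real b)).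
have := mulr_ge0 (normr_ge0 a) (normr_ge0 b).
have := sqr_ge0 a; have := sqr_ge0 b.
lra.
Qed.
End Cplx.

Lemma lim_close (R : realType) (u : nat -> R) (L c e : R) (n0 : nat) :
  u @ \oo --> L -> (forall k, `|u (n0 + k)%N - c| <= e) -> `|L - c| <= e.
Proof.
move=> hu hk.
have H : (fun n => `|u n - c|) @ \oo --> `|L - c|.
  apply: cvg_norm; apply: (cvgB hu (cvg_cst c)).
rewrite -(cvg_lim _ H) //.
apply: limr_le; first by apply/cvg_ex; exists `|L - c|.
exists n0 => // n /= hn; rewrite -(subnKC hn); exact: hk.
Qed.

Unset Implicit Arguments.
Theorem lemma5p5 (R : realType) (d : nat) (f : d.-tuple R -> R[i]) :
  bdd_cont_C f ->
  forall eps : R, 0 < eps ->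
  exists n0 : nat, (1 <= n0)%N /\
    forall (m : nat -> 'I_d -> nat) (B : nat -> seq (d.-tuple nat)),
      in_Dd m B ->
      forall mu : probability (d.-tuple R) R, weak_limit m B mu ->
        Normc.normc (int_mu_n m B n0 f - cintegral mu f) < eps.
Proof.
move=> [[M hM] [cRe cIm]] eps eps0.
have e4 : 0 < eps / 4 by rewrite divr_gt0.
have [d1 d10 H1] := unif_cont cRe e4.
have [d2 d20 H2] := unif_cont cIm e4.
pose del := Num.min d1 d2.
have del0 : 0 < del by rewrite lt_min d10 d20.
pose n := Num.trunc (del^-1).
exists n.+1; split => //.
have hn : ((2 ^ n.+1)%:R : R)^-1 < del.
  rewrite invf_plt ?posrE ?ltr0n ?expn_gt0 //.
  apply: lt_trans (truncnS_gt _) _. rewrite ltr_nat. exact: ltn_expl.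
move=> m B HD mu hw.
have key : forall g : d.-tuple R -> R, bdd_cont_R g ->
   (forall x y, (forall i, 0 <= tnth x i <= 1) ->
      (forall i, `|tnth y i - tnth x i| < del) -> `|g y - g x| < eps / 4) ->
   `|int_mu_n m B n.+1 g - Rintegral mu setT g| <= eps / 4.
  move=> g bg Hg.
  rewrite distrC; apply: (lim_close (n0 := n.+1) (hw g bg)) => k.
  apply: int_mu_diff => // x t hx ht.
  apply/ltW; apply: Hg.
  - move=> i; have := tailp_bound HD hx i; rewrite add0n /Pp big_ord0 invr1.
    move=> /andP [h1 h2]; rewrite h1 /=; apply: le_trans h2 _.
    by rewrite lerBlDr lerDl invr_ge0 ler0n.
  - move=> i; rewrite tnth_mktuple addrAC subrr add0r.
    have /andP [h1 h2] := tailp_bound HD ht i.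
    rewrite ger0_norm //; apply: le_lt_trans hn.
    apply: le_trans h2 _.
    apply: le_trans (_ : (Pp m n.+1 i)%:R^-1 <= _).
      by rewrite lerBlDr lerDl invr_ge0 ler0n.
    by rewrite lef_pV2 ?posrE ?ltr0n ?expn_gt0 ?(Pp_gt0 HD) // ler_nat (Pp_ge HD).
have bR : bdd_cont_R (fun x => complex.Re (f x)).
  split => //; exists M => x; exact: le_trans (Re_le_normc _) (hM x).
have bI : bdd_cont_R (fun x => complex.Im (f x)).
  split => //; exists M => x; exact: le_trans (Im_le_normc _) (hM x).
have dd1 : del <= d1 by rewrite /del ge_min lexx.
have dd2 : del <= d2 by rewrite /del ge_min lexx orbT.
have kR := key _ bR (fun x y hx hy => H1 x y hx (fun i => lt_le_trans (hy i) dd1)).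
have kI := key _ bI (fun x y hx hy => H2 x y hx (fun i => lt_le_trans (hy i) dd2)).
rewrite /int_mu_n in kR kI.
rewrite /int_mu_n sum_complex natC_mul /cintegral.
have -> : forall a b a' b' : R, Complex a b - Complex a' b' = Complex (a - a') (b - b') by [].
apply: le_lt_trans (normc_le _ _) _.
lra.
Qed.
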